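(* Let $r\ge1$ and $n\ge2r$. For every integer $i\ge0$, the restricted Casimir polynomial $C_{2i+1}(x_1,\dots,x_r)$ lies in the subalgebra of $\mathbb{C}[x_1,\dots,x_r]$ generated by the constants and the polynomials $C_{2k}(x_1,\dots,x_r)$ for $k\ge1$.
   Context: Casimir eigenvalues. For $\nu=(\nu_1,\dots,\nu_n)$ and an integer $p\ge 0$, let $$c_p(\nu)=\sum_{i=1}^n(\nu_i+n-i)^p\prod_{j\ne i}\Bigl(1-\frac{1}{\nu_i-\nu_j+j-i}\Bigr).$$ This rational expression is in fact a polynomial in $\nu$; it is the eigenvalue of the higher Casimir operator $\mathrm{tr}(\mathbf E^p)$ of $\mathfrak{gl}_n$ on the irreducible module of highest weight $\nu$. The restricted Casimir polynomial is $$C_p(x_1,\dots,x_r)=c_p(x_1,\dots,x_r,\underbrace{0,\dots,0}_{n-2r},-x_r,\dots,-x_1).$$ *)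

(* Defs.v *)
From HB Require Import structures.
From mathcomp Require Import all_boot all_order all_algebra.
Set Implicit Arguments. Unset Strict Implicit. Unset Printing Implicit Defensive.
Import Order.TTheory GRing.Theory Num.Theory.
Local Open Scope ring_scope.

(* Casimir eigenvalue c_p(nu) for nu = (nu_1,...,nu_n), written with 0-based
   indices i : 'I_n (so the paper's i is i+1, and n - i becomes n - 1 - i):
   c_p(nu) = sum_i (nu_i + n - 1 - i)^p prod_{j <> i} (1 - 1/(nu_i - nu_j + j - i)). *)
Definition casimir (R : fieldType) (n p : nat) (nu : 'I_n -> R) : R :=
  \sum_(i < n) (nu i + (n - 1 - i)%:R) ^+ p *
     \prod_(j < n | j != i) (1 - (nu i - nu j + (j : nat)%:R - (i : nat)%:R)^-1).

Definition xat (R : fieldType) (r : nat) (x : 'I_r -> R) (k : nat) : R :=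
  if insub k is Some i then x i else 0.

(* nu = (x_1,...,x_r, 0,...,0 (n-2r times), -x_r,...,-x_1) *)
Definition restr_weight (R : fieldType) (r n : nat) (x : 'I_r -> R) : 'I_n -> R :=
  fun k => if (k < r)%N then xat x k
           else if (k < n - r)%N then 0
           else - xat x (n - 1 - k).

(* restricted Casimir polynomial C_p(x_1,...,x_r), via the rational expression *)
Definition Crestr (R : fieldType) (r n p : nat) (x : 'I_r -> R) : R :=
  @casimir R n p (@restr_weight R r n x).

Definition generic (R : fieldType) (r n : nat) (x : 'I_r -> R) : Prop :=
  forall i j : 'I_n, i != j ->
    @restr_weight R r n x i - @restr_weight R r n x j + (j : nat)%:R - (i : nat)%:R != 0.

Inductive in_subalg (R : fieldType) (r n : nat) : (('I_r -> R) -> R) -> Prop :=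
| sub_const (c : R) : @in_subalg R r n (fun _ => c)
| sub_gen (k : nat) : (1 <= k)%N -> @in_subalg R r n (fun x => @Crestr R r n (2 * k) x)
| sub_add f g : @in_subalg R r n f -> @in_subalg R r n g -> @in_subalg R r n (fun x => f x + g x)
| sub_mul f g : @in_subalg R r n f -> @in_subalg R r n g -> @in_subalg R r n (fun x => f x * g x).

(* Main.v *)
Require Import Defs.
From HB Require Import structures.
From mathcomp Require Import all_boot all_order all_algebra.
From mathcomp Require Import ring lra zify.
Set Implicit Arguments. Unset Strict Implicit. Unset Printing Implicit Defensive.
Import Order.TTheory GRing.Theory Num.Theory.
Local Open Scope ring_scope.

Section Gen.
Variable R : numFieldType.

Lemma poly_eq_nz (p q : {poly R}) :
  (forall z : R, z != 0 -> p.[z] = q.[z]) -> p = q.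
Proof.
move=> H; apply/eqP; rewrite -subr_eq0; apply/eqP.
pose rs := [seq (k.+1)%:R : R | k <- iota 0 (size (p - q))].
apply: (@roots_geq_poly_eq0 _ _ rs).
- apply/allP => z /mapP [k _ ->]; rewrite /root hornerD hornerN H ?subrr //.
  by rewrite pnatr_eq0.
- rewrite map_inj_uniq ?iota_uniq // => a b /eqP; rewrite eqr_nat => /eqP [] //.
- by rewrite size_map size_iota.
Qed.

Lemma coef0_1_prod (I : Type) (s : seq I) (P : pred I) (a : I -> R) :
  (\prod_(j <- s | P j) (1 - (a j)%:P * 'X))`_0 = 1 /\
  (\prod_(j <- s | P j) (1 - (a j)%:P * 'X))`_1 = - \sum_(j <- s | P j) a j.
Proof.
elim: s => [|x s IH].
  rewrite !big_nil coefC /=. apply: conj => //. rewrite coefC /= oppr0 //.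
case: IH => IH0 IH1.
rewrite !big_cons; case: (P x) => //.
rewrite mulrBl mul1r -mulrA !coefB !coefCM !coefXM /= IH0 IH1.
apply: conj; first by rewrite mulr0 subr0.
by rewrite mulr1 opprD addrC.
Qed.


Lemma size_prodX (I : finType) (P : pred I) (f : I -> R) :
  size (\prod_(j | P j) ('X - (f j)%:P)) = #|P|.+1.
Proof.
rewrite size_prod; last by move=> j _; rewrite polyXsubC_eq0.
rewrite (eq_bigr (fun _ => 2%N)); last by move=> j _; rewrite size_XsubC.
rewrite sum_nat_const; lia.
Qed.

Definition lw (n : nat) (be : 'I_n -> R) (ga : R) (i : 'I_n) : R :=
  ga * \prod_(j | j != i) (1 - ga / (be i - be j)).

Lemma lagr_u (n : nat) (be : 'I_n -> R) (ga : R) :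
  (forall i j, i != j -> be i - be j != 0) ->
  \sum_i (lw be ga i)%:P * \prod_(j | j != i) ('X - (be j)%:P) =
  \prod_j ('X - (be j)%:P) - \prod_j ('X - (be j + ga)%:P).
Proof.
move=> Hd; apply/eqP; rewrite -subr_eq0; apply/eqP.
apply: (@roots_geq_poly_eq0 _ _ [seq be i | i <- enum 'I_n]).
- apply/allP => z /mapP [i _ ->]; rewrite /root.
  rewrite !(hornerD, hornerN) horner_sum !horner_prod.
  rewrite (bigD1 i) //=.
  rewrite [X in _ + X - _ == _]big1 ?addr0; last first.
    move=> k /negPf ki; rewrite hornerCM horner_prod (bigD1 i) /=; last by rewrite eq_sym ki.
    by rewrite hornerXsubC subrr mul0r mulr0.
  have P1 : \prod_(i0<n) ('X - (be i0)%:P).[be i] = 0.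
    by rewrite (bigD1 i) //= hornerXsubC subrr mul0r.
  have P2 : \prod_(i0<n) ('X - (be i0 + ga)%:P).[be i] = (- ga) * \prod_(j | j != i) (be i - (be j + ga)).
    rewrite (bigD1 i) //= hornerXsubC; congr (_ * _); first ring.
    by apply: eq_bigr => j _; rewrite hornerXsubC.
  have P3 : ((lw be ga i)%:P * \prod_(j | j != i) ('X - (be j)%:P)).[be i] = lw be ga i * \prod_(j|j != i)(be i - be j).
    by rewrite hornerCM horner_prod; congr (_*_); apply: eq_bigr => j _; rewrite hornerXsubC.
  rewrite P1 P2 P3.
  rewrite /lw -mulrA -big_split /=.
  rewrite (eq_bigr (fun j => be i - (be j + ga))); last first.
    move=> j ji; have := Hd i j; rewrite eq_sym ji => /(_ isT) H.
    by field.
  apply/eqP; ring.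
- rewrite map_inj_uniq ?enum_uniq // => a b E; apply/eqP; apply: contraT => ab.
  by have := Hd a b ab; rewrite E subrr eqxx.
- rewrite size_map size_enum_ord.
  have Hn : forall i : 'I_n, (n > 0)%N by move=> [m hm]; lia.
  have H1 : (size (\sum_i (lw be ga i)%:P * \prod_(j | j != i) ('X - (be j)%:P))%R <= n)%N.
    apply: (leq_trans (size_sum _ _ _)); apply/bigmax_leqP => i _.
    rewrite mul_polyC; apply: (leq_trans (size_scale_leq _ _)).
    by rewrite size_prodX cardC1 card_ord prednK // (Hn i).
  have H2 : (size (\prod_j ('X - (be j)%:P) - \prod_j ('X - (be j + ga)%:P))%R <= n)%N.
    apply/leq_sizeP => k; rewrite leq_eqVlt => /orP [/eqP <-|kn].
      rewrite coefB.
      have S1 := size_prodX predT be; have S2 := size_prodX predT (fun j => be j + ga).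
      rewrite cardT size_enum_ord in S1; rewrite cardT size_enum_ord in S2.
      have L1 := lead_coef_prod_XsubC (index_enum 'I_n) predT be.
      have L2 := lead_coef_prod_XsubC (index_enum 'I_n) predT (fun j => be j + ga).
      rewrite !lead_coefE in L1 L2.
      rewrite S1 in L1; rewrite S2 in L2. rewrite /= in L1 L2.
      by rewrite L1 L2 subrr.
    rewrite coefB !nth_default ?subrr //.
      by rewrite size_prodX cardT size_enum_ord.
    by rewrite size_prodX cardT size_enum_ord.
  by apply: (leq_trans (size_polyD _ _)); rewrite geq_max H1 size_polyN H2.
Qed.

Lemma prod_rev (n : nat) (P : pred 'I_n) (a : 'I_n -> R) (z : R) : z != 0 ->
  \prod_(j | P j) (1 - a j * z) = z ^+ #|P| * \prod_(j | P j) (z^-1 - a j).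
Proof.
move=> z0; rewrite -prodr_const -big_split /=; apply: eq_bigr => j _.
by field.
Qed.

Lemma lagr_z (n : nat) (be : 'I_n -> R) (ga : R) :
  (forall i j, i != j -> be i - be j != 0) ->
  \sum_i (lw be ga i)%:P * ('X * \prod_(j | j != i) (1 - (be j)%:P * 'X)) =
  \prod_j (1 - (be j)%:P * 'X) - \prod_j (1 - (be j + ga)%:P * 'X).
Proof.
move=> Hd; apply: poly_eq_nz => z z0.
have := congr1 (fun p => z ^+ n * p.[z^-1]) (lagr_u ga Hd) => /= H.
rewrite !(hornerD, hornerN) horner_sum !horner_prod mulrBr mulr_sumr in H.
have E : forall (P : pred 'I_n) (a : 'I_n -> R), (\prod_(j | P j) (1 - (a j)%:P * 'X)).[z]
    = z ^+ #|P| * \prod_(j | P j) ('X - (a j)%:P).[z^-1].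
  move=> P a; rewrite horner_prod (eq_bigr (fun j => 1 - a j * z)); last by move=> j _; rewrite !hornerE.
  rewrite (prod_rev _ _ z0); congr (_ * _).
  by apply: eq_bigr => j _; rewrite hornerXsubC.
rewrite !(hornerD, hornerN) horner_sum !E cardT size_enum_ord -H.
apply: eq_bigr => i _.
rewrite hornerCM hornerM hornerX E hornerCM cardC1 card_ord.
have n0 : (0 < n)%N by case: i => m; lia.
have -> : z ^+ n = z * z ^+ n.-1 by rewrite -exprS prednK.
rewrite horner_prod; ring.
Qed.

Lemma tel (c : R) (N : nat) :
  (1 - c%:P * 'X) * \sum_(q < N) c ^+ q *: 'X^q = 1 - c ^+ N *: 'X^N.
Proof.
elim: N => [|N IH]; first by rewrite big_ord0 mulr0 expr0 scale1r expr0 subrr.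
rewrite big_ord_recr /= mulrDr IH -!mul_polyC !exprS polyCM; ring.
Qed.

Definition Psi (n N : nat) (v be : 'I_n -> R) : {poly R} :=
  'X * \poly_(q < N) (\sum_i v i * be i ^+ q).

Lemma Psi_sum (n N : nat) (v be : 'I_n -> R) :
  Psi N v be = 'X * \sum_i (v i)%:P * \sum_(q < N) be i ^+ q *: 'X^q.
Proof.
rewrite /Psi poly_def; congr (_ * _).
rewrite (eq_bigr (fun q : 'I_N => \sum_i (v i * be i ^+ q) *: 'X^q)); last first.
  by move=> q _; rewrite scaler_suml.
rewrite exchange_big /=; apply: eq_bigr => i _.
by rewrite mulr_sumr; apply: eq_bigr => q _; rewrite mul_polyC scalerA.
Qed.

Lemma trunc (n N : nat) (be : 'I_n -> R) (ga : R) :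
  (forall i j, i != j -> be i - be j != 0) ->
  exists S, \prod_j (1 - (be j)%:P * 'X) * (1 - Psi N (lw be ga) be) =
            \prod_j (1 - (be j + ga)%:P * 'X) + 'X^(N.+1) * S.
Proof.
move=> Hd.
set D := \prod_j (1 - (be j)%:P * 'X).
set E := \prod_j (1 - (be j + ga)%:P * 'X).
have key : forall i, D * (\sum_(q<N) be i ^+ q *: 'X^q) =
    \prod_(j | j != i) (1 - (be j)%:P * 'X) * (1 - be i ^+ N *: 'X^N).
  move=> i; rewrite /D (bigD1 i) //= -tel; ring.
exists (\sum_i (lw be ga i * be i ^+ N)%:P * \prod_(j | j != i) (1 - (be j)%:P * 'X)).
have L := lagr_z ga Hd; rewrite -/D -/E in L.
have H : D * Psi N (lw be ga) be = (D - E) - 'X^(N.+1) *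
   \sum_i (lw be ga i * be i ^+ N)%:P * \prod_(j | j != i) (1 - (be j)%:P * 'X).
  rewrite Psi_sum -L mulr_sumr mulr_sumr mulr_sumr -sumrB; apply: eq_bigr => i _.
  set T := \sum_(q < N) _.
  have -> : D * ('X * ((lw be ga i)%:P * T)) = 'X * (lw be ga i)%:P * (D * T) by ring.
  set c := lw be ga i; rewrite key -mul_polyC [(c * _)%:P]polyCM exprS; ring.
rewrite mulrBr mulr1 H; ring.
Qed.

Lemma low_coef0 (A K T : {poly R}) (M : nat) : A`_0 != 0 -> A * K = 'X^M * T ->
  forall k, (k < M)%N -> K`_k = 0.
Proof.
move=> A0 E k kM.
have cop : coprimep ('X^M) A.
  apply: coprimep_expl; rewrite coprimep_sym.
  have -> : ('X : {poly R}) = 'X - 0%:P by rewrite subr0.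
  by rewrite coprimep_XsubC /root horner_coef0.
have dv : 'X^M %| K.
  by rewrite -(Gauss_dvdpr _ cop) E dvdp_mulr // dvdpp.
move: dv; rewrite dvdp_eq => /eqP ->.
by rewrite coefMXn kM.
Qed.

Section Moments.
Variables (n : nat) (b : 'I_n -> R) (sg : 'I_n -> 'I_n).
Hypothesis Hd : forall i j, i != j -> b i - b j != 0.
Hypothesis sg_inj : injective sg.
Hypothesis Hsym : forall k, b (sg k) = -1 - b k.

Definition dm (q : nat) : R := \sum_k lw b 1 k * b k ^+ q.

Lemma coef_Psi N (v be : 'I_n -> R) k :
  (Psi N v be)`_k = if k is k'.+1 then (if (k' < N)%N then \sum_i v i * be i ^+ k' else 0) else 0.
Proof. by rewrite /Psi coefXM; case: k => //= k; rewrite coef_poly. Qed.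

Lemma dm0 : dm 0 = n%:R.
Proof.
have [S E] := trunc 1 1 Hd.
have := congr1 (fun p : {poly R} => p`_1) E => /=.
rewrite mulrBr mulr1 coefB coefD coefXnM /= addr0.
rewrite coefM big_ord_recr /= big_ord_recl big_ord0 /= addr0 !coef_Psi /=.
have [D0 D1] := coef0_1_prod (index_enum 'I_n) predT b.
have [E0 E1] := coef0_1_prod (index_enum 'I_n) predT (fun j => b j + 1).
rewrite D0 D1 E1 mul1r mulr0 addr0 big_split /= sumr_const card_ord -/(dm 0) => H.
have -> : dm 0 = - (\sum_(i < n) b i) - (- (\sum_(i < n) b i) - dm 0) by ring.
rewrite H; ring.
Qed.

Lemma lwN k : lw (fun k => - b k) (-1) k = - lw b 1 k.
Proof.
rewrite /lw mulN1r mul1r; congr (- _); apply: eq_bigr => j _.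
have -> : - b k - - b j = - (b k - b j) by ring.
rewrite invrN; ring.
Qed.

Lemma dmN q : \sum_i lw (fun k => - b k) (-1) i * (- b i) ^+ q = - (-1) ^+ q * dm q.
Proof.
rewrite /dm mulr_sumr; apply: eq_bigr => i _; rewrite lwN (exprNn (b i)); ring.
Qed.

Lemma dm_odd m : 2%:R * dm (2 * m).+1 =
  - \sum_(0 <= a < (2 * m).+1) (-1) ^+ (2 * m - a) * dm a * dm (2 * m - a).
Proof.
pose N := (2 * m).+2.
have [S E1] := trunc N 1 Hd.
have Hd' : forall i j, i != j -> (fun k => - b k) i - (fun k => - b k) j != 0.
  move=> i j ij /=; have -> : - b i - - b j = - (b i - b j) by ring.
  by rewrite oppr_eq0 Hd.
have [S' E2] := trunc N (-1) Hd'.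
have DE : \prod_j (1 - (- b j)%:P * 'X) = \prod_j (1 - (b j + 1)%:P * 'X).
  rewrite [LHS](reindex_inj sg_inj) /=; apply: eq_bigr => j _; rewrite Hsym.
  by congr (1 - _%:P * 'X); ring.
have ED : \prod_j (1 - (- b j + -1)%:P * 'X) = \prod_j (1 - (b j)%:P * 'X).
  rewrite [LHS](reindex_inj sg_inj) /=; apply: eq_bigr => j _; rewrite Hsym.
  by congr (1 - _%:P * 'X); ring.
rewrite /= DE ED in E2.
move: E1 E2.
set D := \prod_j (1 - (b j)%:P * 'X).
set E := \prod_j (1 - (b j + 1)%:P * 'X).
set Ps := Psi N (lw b 1) b.
set Ps' := Psi N _ _ => E1 E2.
have K : (D * E) * (Ps * Ps' - Ps - Ps') =
   'X^(N.+1) * (E * S' + S * D + 'X^(N.+1) * S * S').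
  have -> : D * E * (Ps * Ps' - Ps - Ps') = (D * (1 - Ps)) * (E * (1 - Ps')) - D * E by ring.
  rewrite E1 E2; ring.
have c0 : (D * E)`_0 != 0.
  have [D0 _] := coef0_1_prod (index_enum 'I_n) predT b.
  have [E0 _] := coef0_1_prod (index_enum 'I_n) predT (fun j => b j + 1).
  by rewrite coef0M D0 E0 mulr1 oner_neq0.
have := low_coef0 c0 K (ltnSn N).
rewrite !coefB /Ps /Ps' coef_Psi /N ltnSn coefM.
rewrite -(big_mkord xpredT (fun j => (Psi (2 * m).+2 (lw b 1) b)`_j *
   (Psi (2 * m).+2 (lw (fun k => - b k) (-1)) (fun k => - b k))`_((2 * m).+2 - j))).
rewrite big_nat_recl // big_nat_recr //= !coef_Psi /= subnn mulr0 mul0r add0r addr0.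
rewrite ltnSn dmN -/(dm _).
rewrite (@big_nat_cond _ _ _ 0 (2 * m).+1 xpredT) /=.
rewrite (eq_bigr (fun a => - ((-1) ^+ (2 * m - a) * dm a * dm (2 * m - a)))); last first.
  move=> a /andP [Ha _].
  rewrite !coef_Psi.
  have -> : ((2 * m).+2 - a.+1 = (2 * m - a).+1)%N by lia.
  have -> : (a < (2 * m).+2)%N by lia.
  have -> : (2 * m - a < (2 * m).+2)%N by lia.
  by rewrite dmN -/(dm _); ring.
rewrite -big_nat_cond sumrN.
have -> : (-1) ^+ (2 * m).+1 = -1 :> R by rewrite exprS exprM sqrrN !expr1n mulr1.
move=> H; have -> : 2%:R * dm (2 * m).+1 =
  - \sum_(0 <= i < (2 * m).+1) (-1) ^+ (2 * m - i) * dm i * dm (2 * m - i)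
  - (- \sum_(0 <= i < (2 * m).+1) (-1) ^+ (2 * m - i) * dm i * dm (2 * m - i)
     - dm (2 * m).+1 - - - 1 * dm (2 * m).+1) by ring.
by rewrite H subr0.
Qed.
End Moments.
End Gen.

Section Conc.
Variables (R : numFieldType) (r n : nat).
Hypothesis Hrn : (2 * r <= n)%N.

Definition nuv (x : 'I_r -> R) : 'I_n -> R := @restr_weight R r n x.
Definition hh : R := n%:R / 2%:R.
Definition bv (x : 'I_r -> R) (k : 'I_n) : R := nuv x k + (n - 1 - k)%:R - hh.

Lemma natr_sub1 (k : 'I_n) : (n - 1 - k)%:R = (n - 1)%:R - k%:R :> R.
Proof. by rewrite natrB //; case: k => k /= Hk; lia. Qed.

Lemma bv_diff (x : 'I_r -> R) (i j : 'I_n) :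
  bv x i - bv x j = nuv x i - nuv x j + (j : nat)%:R - (i : nat)%:R.
Proof. rewrite /bv !natr_sub1; ring. Qed.

Lemma Crestr_eq (x : 'I_r -> R) p : @Crestr R r n p x = \sum_k lw (bv x) 1 k * (bv x k + hh) ^+ p.
Proof.
rewrite /Crestr /casimir; apply: eq_bigr => k _; rewrite mulrC; congr (_ * _).
  rewrite /lw mul1r; apply: eq_bigr => j _; rewrite bv_diff div1r //.
by rewrite /bv subrK.
Qed.

Lemma nuv_rev (x : 'I_r -> R) (k : 'I_n) : nuv x (rev_ord k) = - nuv x k.
Proof.
rewrite /nuv /restr_weight /=.
case: k => k Hk /=.
have E : (n - 1 - (n - k.+1) = k)%N by lia.
have E2 : (n - 1 - k = n - k.+1)%N by lia.
rewrite E E2.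
case: ifP => H1; case: ifP => H2; (try case: ifP => H3); (try case: ifP => H4);
  rewrite ?opprK ?oppr0 //; exfalso; lia.
Qed.

Lemma bv_rev (x : 'I_r -> R) (k : 'I_n) : bv x (rev_ord k) = -1 - bv x k.
Proof.
rewrite /bv nuv_rev /hh /=.
case: k => k Hk /=.
have E : (n - 1 - (n - k.+1) = k)%N by lia.
have E2 : (n - 1 - k = n - k.+1)%N by lia.
rewrite E E2.
have H : ((n - k.+1 + k).+1)%:R = n%:R :> R by congr (_%:R); lia.
rewrite -natr1 natrD in H; rewrite -H.
by field.
Qed.


Definition Mm (x : 'I_r -> R) (t : R) (q : nat) : R :=
  \sum_k lw (bv x) 1 k * (bv x k + t) ^+ q.

Lemma Mshift x t u q :
  Mm x (t + u) q = \sum_(s < q.+1) (u ^+ (q - s) * 'C(q, s)%:R) * Mm x t s.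
Proof.
rewrite /Mm.
rewrite (eq_bigr (fun k => \sum_(s < q.+1) lw (bv x) 1 k * ((u ^+ (q - s) * 'C(q, s)%:R) * (bv x k + t) ^+ s))); last first.
  move=> k _; rewrite addrA (addrC _ u) exprDn mulr_sumr; apply: eq_bigr => s _.
  rewrite -mulr_natr; ring.
rewrite exchange_big /=; apply: eq_bigr => s _; rewrite mulr_sumr; apply: eq_bigr => k _; ring.
Qed.

Lemma Crestr_M x p : @Crestr R r n p x = Mm x hh p.
Proof. by rewrite Crestr_eq. Qed.

Lemma dm_M x q : dm (bv x) q = Mm x 0 q.
Proof. by rewrite /dm /Mm; apply: eq_bigr => k _; rewrite addr0. Qed.

Definition InA (f : ('I_r -> R) -> R) : Prop :=
  exists g, @in_subalg R r n g /\ forall x, @generic R r n x -> f x = g x.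

Lemma InA_const c : InA (fun _ => c).
Proof. by exists (fun _ => c); split => //; apply: sub_const. Qed.

Lemma InA_add f g : InA f -> InA g -> InA (fun x => f x + g x).
Proof.
move=> [f' [Hf Ef]] [g' [Hg Eg]]; exists (fun x => f' x + g' x); split.
  exact: sub_add.
by move=> x gx; rewrite Ef ?Eg.
Qed.

Lemma InA_mul f g : InA f -> InA g -> InA (fun x => f x * g x).
Proof.
move=> [f' [Hf Ef]] [g' [Hg Eg]]; exists (fun x => f' x * g' x); split.
  exact: sub_mul.
by move=> x gx; rewrite Ef ?Eg.
Qed.

Lemma InA_ext f g : InA f -> (forall x, @generic R r n x -> f x = g x) -> InA g.
Proof.
move=> [f' [Hf Ef]] E; exists f'; split => // x gx; by rewrite -E ?Ef.
Qed.

Lemma InA_sum K (F : 'I_K -> ('I_r -> R) -> R) :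
  (forall s, InA (F s)) -> InA (fun x => \sum_(s < K) F s x).
Proof.
elim: K F => [|K IH] F HF.
  by apply: (InA_ext (InA_const 0)) => x _; rewrite big_ord0.
apply: (InA_ext (InA_add (IH (fun s => F (widen_ord (leqnSn K) s)) _) (HF ord_max))).
  by move=> s; exact: (HF (widen_ord (leqnSn K) s)).
by move=> x _; rewrite big_ord_recr.
Qed.


Lemma gen_Hd (x : 'I_r -> R) : @generic R r n x ->
  forall i j, i != j -> bv x i - bv x j != 0.
Proof. by move=> g i j ij; rewrite bv_diff; apply: g. Qed.

Lemma step q :
  (forall s, (s < q)%N -> InA (fun x => Mm x 0 s) /\ InA (fun x => Mm x hh s)) ->
  InA (fun x => Mm x 0 q) /\ InA (fun x => Mm x hh q).
Proof.
move=> IH.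
have Hq := odd_double_half q.
case Eo : (odd q) Hq => /= Hq.
-
  pose m := q./2.
  have qm : q = (2 * m).+1 by rewrite /m; lia.
  have Hd0 : InA (fun x => Mm x 0 q).
    have Hsum : InA (fun x => \sum_(a < (2 * m).+1)
        (-1) ^+ (2 * m - a) * Mm x 0 a * Mm x 0 (2 * m - a)).
      apply: InA_sum => a; apply: InA_mul; first apply: InA_mul.
      + exact: InA_const.
      + case: a => a /= Ha; have [H1 _] := IH a ltac:(lia); exact: H1.
      + case: a => a /= Ha; have [H1 _] := IH (2 * m - a)%N ltac:(lia); exact: H1.
    apply: (InA_ext (InA_mul (InA_const (- 2%:R^-1)) Hsum)) => x gx.
    have := @dm_odd R n (bv x) (@rev_ord n) (gen_Hd gx) (@rev_ord_inj n) (bv_rev x) m.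
    rewrite -(big_mkord xpredT (fun a => (-1) ^+ (2 * m - a) * Mm x 0 a * Mm x 0 (2 * m - a))).
    rewrite qm !dm_M.
    have -> : \sum_(0 <= a < (2 * m).+1) (-1)^+ (2 * m - a) * dm (bv x) a * dm (bv x) (2 * m - a) =
      \sum_(0 <= a < (2 * m).+1) (-1)^+ (2 * m - a) * Mm x 0 a * Mm x 0 (2 * m - a).
      by apply: eq_bigr => a _; rewrite !dm_M.
    move=> H; have -> : Mm x 0 (2 * m).+1 = 2%:R^-1 * (2%:R * Mm x 0 (2 * m).+1).
      by rewrite mulrA mulVf ?mul1r // pnatr_eq0.
    by rewrite H; ring.
  split => //.
  have Hs : forall s : 'I_q.+1, InA (fun x => Mm x 0 s).
    move=> [s Hs] /=; case: (ltnP s q) => sq; first by case: (IH s sq).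
    by have -> : s = q by lia.
  apply: (InA_ext (InA_sum (fun s : 'I_q.+1 =>
     InA_mul (InA_const (hh ^+ (q - s) * 'C(q, s)%:R)) (Hs s)))) => x _.
  by have := Mshift x 0 hh q; rewrite add0r => ->.
-
  pose m := q./2.
  have qm : q = (2 * m)%N by rewrite /m; lia.
  have Hc : InA (fun x => Mm x hh q).
    case: (posnP m) => m0.
      apply: (InA_ext (InA_const n%:R)) => x gx.
      rewrite qm m0 /= -(@dm0 R n (bv x) (gen_Hd gx)) dm_M /Mm.
      by apply: eq_bigr => k _; rewrite !expr0.
    have G : InA (fun x => @Crestr R r n (2 * m) x).
      exists (fun x => @Crestr R r n (2 * m) x); split => //.
      by apply: sub_gen; lia.
    by apply: (InA_ext G) => x _; rewrite Crestr_M qm.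
  split => //.
  have Hs : forall s : 'I_q.+1, InA (fun x => Mm x hh s).
    move=> [s Hs] /=; case: (ltnP s q) => sq; first by case: (IH s sq).
    by have -> : s = q by lia.
  apply: (InA_ext (InA_sum (fun s : 'I_q.+1 =>
     InA_mul (InA_const ((- hh) ^+ (q - s) * 'C(q, s)%:R)) (Hs s)))) => x _.
  by have := Mshift x hh (- hh) q; rewrite subrr => ->.
Qed.

Lemma all_q q : InA (fun x => Mm x 0 q) /\ InA (fun x => Mm x hh q).
Proof.
elim: q {-2}q (leqnn q) => [|Q IHQ] q Hq.
  by apply: step => s; move: Hq; rewrite leqn0 => /eqP ->.
apply: step => s sq; apply: IHQ; lia.
Qed.


End Conc.

Unset Implicit Arguments.

Theorem lemma3 (R : numClosedFieldType) (r n i : nat) :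
  (1 <= r)%N -> (2 * r <= n)%N ->
  exists f : ('I_r -> R) -> R,
    @in_subalg R r n f /\
    forall x : 'I_r -> R, @generic R r n x -> @Crestr R r n (2 * i + 1) x = f x.
Proof.
move=> _ Hrn.
have [_ [g [Hg Eg]]] := @all_q R r n Hrn (2 * i + 1)%N.
exists g; split => // x gx; rewrite Crestr_M //; exact: (Eg x gx).
Qed.
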